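(* Let $R$ be a semilocal commutative ring in which $2$ is invertible, $I$ an ideal of $R$, and $n\ge3$. Equip $R^{2n+1}$ with the standard form of matrix $\tilde\phi_{2n+1}=(2)\perp\widetilde{\psi}_n$. Let $u\in R^{2n+1}$ be an isotropic unimodular vector and $v\in I^{2n+1}$ with $\langle u,v\rangle=0$. Then $\sigma_{u,v}\in\mathrm{EO}_{2n+1}(R,I)$.
   Context: $e_{i,j}$ are matrix units and $\widetilde{\psi}_s=\sum_{i=1}^s(e_{2i-1,2i}+e_{2i,2i-1})$. On $R^{2n+1}$ the bilinear form is $\langle a,b\rangle=a^t\tilde\phi_{2n+1}b$ and the quadratic form is $q(a)=\tfrac12\langle a,a\rangle$. For $u,v$ with $u$ unimodular, $q(u)=0$, $\langle u,v\rangle=0$ and $r=q(v)$, the Eichler–Siegel–Dickson transvection is $\sigma_{u,v}(x)=x+\langle v,x\rangle u-\langle u,x\rangle v-r\langle u,x\rangle u$. Odd elementary orthogonal group: for $N=2s+1$ and $1\le i\le s$, $F^1_i(\lambda)=I_N+\lambda(e_{1,2i+1}-2e_{2i,1}-\lambda e_{2i,2i+1})$, $F^2_i(\lambda)=I_N+\lambda(e_{1,2i}-2e_{2i+1,1}-\lambda e_{2i+1,2i})$. $\mathrm{EO}_{2s+1}(R)$ is generated by these with $\lambda\in R$, $\mathrm{EO}_{2s+1}(I)$ by those with $\lambda\in I$, and $\mathrm{EO}_{2s+1}(R,I)$ is the normal closure of $\mathrm{EO}_{2s+1}(I)$ in $\mathrm{EO}_{2s+1}(R)$. *)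

(* Defs.v *)
From HB Require Import structures.
From mathcomp Require Import all_boot all_order all_algebra.
Set Implicit Arguments. Unset Strict Implicit. Unset Printing Implicit Defensive.
Import GRing.Theory.
Local Open Scope ring_scope.

Section Defs.
Variable R : comUnitRingType.

Definition is_ideal (I : R -> Prop) : Prop :=
  I 0 /\ (forall x y, I x -> I y -> I (x - y)) /\ (forall r x, I x -> I (r * x)).

Definition is_maximal_ideal (M : R -> Prop) : Prop :=
  is_ideal M /\ ~ M 1 /\
  forall J : R -> Prop, is_ideal J -> (forall x, M x -> J x) -> ~ J 1 ->
    forall x, J x -> M x.

Definition semilocal : Prop :=
  exists (k : nat) (Ms : nat -> R -> Prop),
    forall M, is_maximal_ideal M ->
      exists i, (i < k)%N /\ forall x, M x <-> Ms i x.

Variable n : nat.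
Local Notation N := (n.*2).+1.

(* Standard form matrix phi~_{2n+1} = (2) _|_ psi~_n.
   0-based indices: (0,0) -> 2; pairs (2i-1, 2i), i = 1..n, carry 1. *)
Definition phi_std : 'M[R]_N :=
  \matrix_(i < N, j < N)
    if (i == 0 :> nat) && (j == 0 :> nat) then 2%:R
    else if (odd i && (j == i.+1 :> nat)) || (odd j && (i == j.+1 :> nat))
    then 1 else 0.

Definition bform (a b : 'cV[R]_N) : R := (a^T *m phi_std *m b) 0 0.
Definition qform (a : 'cV[R]_N) : R := 2%:R^-1 * bform a a.

Definition unimodular (u : 'cV[R]_N) : Prop :=
  exists w : 'cV[R]_N, \sum_(i < N) u i 0 * w i 0 = 1.

(* Eichler--Siegel--Dickson transvection, as the matrix of
   x |-> x + <v,x> u - <u,x> v - r <u,x> u with r = q(v). *)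
Definition ESD (u v : 'cV[R]_N) : 'M[R]_N :=
  1%:M + u *m (v^T *m phi_std) - v *m (u^T *m phi_std)
       - qform v *: (u *m (u^T *m phi_std)).

(* Matrix units, 1-based indices k,l in 1..N. *)
Definition E (k l : nat) : 'M[R]_N := delta_mx (inord k.-1) (inord l.-1).

Definition F1 (i : nat) (lam : R) : 'M[R]_N :=
  1%:M + lam *: (E 1 (i.*2.+1) - 2%:R *: E (i.*2) 1 - lam *: E (i.*2) (i.*2.+1)).
Definition F2 (i : nat) (lam : R) : 'M[R]_N :=
  1%:M + lam *: (E 1 (i.*2) - 2%:R *: E (i.*2.+1) 1 - lam *: E (i.*2.+1) (i.*2)).

Inductive gen_group (S : 'M[R]_N -> Prop) : 'M[R]_N -> Prop :=
  | gg_gen x : S x -> gen_group S x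
  | gg_one : gen_group S 1%:M
  | gg_mul x y : gen_group S x -> gen_group S y -> gen_group S (x *m y)
  | gg_inv x : gen_group S x -> gen_group S (invmx x).

Definition elem_gens (J : R -> Prop) (g : 'M[R]_N) : Prop :=
  exists i lam, (1 <= i <= n)%N /\ J lam /\ (g = F1 i lam \/ g = F2 i lam).

Definition EO (J : R -> Prop) : 'M[R]_N -> Prop := gen_group (elem_gens J).

Definition EO_rel (I : R -> Prop) : 'M[R]_N -> Prop :=
  gen_group (fun g => exists a h, EO (fun _ => True) a /\ EO I h /\
                                  g = a *m h *m invmx a).
End Defs.

(* Main.v *)
Require Import Defs.
From mathcomp Require Import all_boot all_order all_algebra.
From mathcomp Require Import ring zify.
From Stdlib Require Import ClassicalEpsilon Classical FunctionalExtensionality PropExtensionality.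
Set Implicit Arguments. Unset Strict Implicit. Unset Printing Implicit Defensive.
Import GRing.Theory.
Local Open Scope ring_scope.

Section Zorn.
Variable R : comUnitRingType.
Variable J0 : R -> Prop.
Hypothesis J0i : is_ideal J0.
Hypothesis J0p : ~ J0 1.

Definition psub (X Y : R -> Prop) := forall x, X x -> Y x.
Definition good (X : R -> Prop) := is_ideal X /\ ~ X 1.
Definition bigger (X : R -> Prop) := exists Z, good Z /\ psub X Z /\ ~ psub Z X.

Definition succ (X : R -> Prop) : R -> Prop :=
  match excluded_middle_informative (bigger X) with
  | left h => proj1_sig (constructive_indefinite_description _ h)
  | right _ => X
  end.

Lemma succ_spec X : bigger X -> good (succ X) /\ psub X (succ X) /\ ~ psub (succ X) X.
Proof.
rewrite /succ; case: excluded_middle_informative => // h _.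
by case: (constructive_indefinite_description _ h).
Qed.

Lemma succ_id X : ~ bigger X -> succ X = X.
Proof. by rewrite /succ; case: excluded_middle_informative. Qed.

Lemma succ_ge X : psub X (succ X).
Proof.
case: (classic (bigger X)) => h; first by case: (succ_spec h) => _ [].
by rewrite succ_id.
Qed.

Lemma psub_eq X Y : psub X Y -> psub Y X -> X = Y.
Proof.
move=> h1 h2; apply: functional_extensionality => x.
by apply: propositional_extensionality; split; [apply: h1 | apply: h2].
Qed.

Inductive tower : (R -> Prop) -> Prop :=
  | tw_base : tower J0
  | tw_succ X : tower X -> tower (succ X)
  | tw_union (C : (R -> Prop) -> Prop) :
      (forall X, C X -> tower X) -> tower (fun x => J0 x \/ exists X, C X /\ X x).

Lemma tower_base X : tower X -> psub J0 X.
Proof.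
elim=> [|Y _ IH|C _ _]; first by [].
- by move=> x /IH; apply: succ_ge.
- by move=> x h; left.
Qed.

Definition ext c := forall Y, tower Y -> psub Y c -> ~ psub c Y -> psub (succ Y) c.

Lemma L1 c : tower c -> ext c -> forall Y, tower Y -> psub Y c \/ psub (succ c) Y.
Proof.
move=> tc ec Y; elim=> [|Y' tY' IH|C tC IH].
- by left; apply: tower_base.
- case: IH => [h|h]; last by right => x /h; apply: succ_ge.
  case: (classic (psub c Y')) => h'.
    by right; rewrite (psub_eq h h').
  by left; apply: ec.
- case: (classic (exists X, C X /\ psub (succ c) X)) => [[X [CX h]]|h].
    by right => x /h hx; right; exists X.
  left => x [/(tower_base tc) //|[X [CX hX]]].
  case: (IH X CX) => [/(_ x hX) //|h'].
  by exfalso; apply: h; exists X.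
Qed.

Lemma L2 c : tower c -> ext c.
Proof.
elim=> [|c' tc IH|C tC IH].
- move=> Y tY hY hn; exfalso; apply: hn; exact: tower_base.
- move=> Y tY hY hn.
  case: (L1 tc IH tY) => [h|h]; last by exfalso; apply: hn.
  case: (classic (psub c' Y)) => h'.
    by rewrite (psub_eq h h').
  by move=> x /(IH Y tY h h'); apply: succ_ge.
- move=> Y tY hY hn.
  have [x [Ux nYx]] : exists x, (J0 x \/ exists X, C X /\ X x) /\ ~ Y x.
    apply: NNPP => hc; apply: hn => x Ux; apply: NNPP => nY; apply: hc; exists x; split => //.
  case: Ux => [/(tower_base tY) //|[X [CX Xx]]].
  have nXY : ~ psub X Y by move=> h; apply: nYx; apply: h.
  case: (L1 (tC X CX) (IH X CX) tY) => [h|h]; last first.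
    by exfalso; apply: nXY => z /succ_ge /h.
  by move=> z /(IH X CX Y tY h nXY) hz; right; exists X.
Qed.

Lemma chain X Y : tower X -> tower Y -> psub Y X \/ psub X Y.
Proof.
move=> tX tY; case: (L1 tX (L2 tX) tY) => [h|h]; first by left.
by right => x /succ_ge /h.
Qed.

Lemma tower_good X : tower X -> good X.
Proof.
elim=> [|Y tY IH|C tC IH]; first by [].
- case: (classic (bigger Y)) => h; first by case: (succ_spec h).
  by rewrite succ_id.
- have key : forall x, (J0 x \/ exists X, C X /\ X x) ->
      exists T, tower T /\ good T /\ T x /\ psub T (fun x => J0 x \/ exists X, C X /\ X x).
    move=> x [hx|[X1 [CX hX]]].
      exists J0; split; first exact: tw_base.
      by split; [exact: (conj J0i J0p) | split=> // z hz; left].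
    exists X1; split; first exact: tC.
    by split; [apply: IH | split=> // z hz; right; exists X1].
  split; last first.
    move=> /key [T [_ [[_ nT] [T1 _]]]]; exact: nT.
  split; first by left; case: J0i.
  split.
    move=> x y /key [T1 [t1 [[[_ [s1 _]] _] [h1 sT1]]]] /key [T2 [t2 [[[_ [s2 _]] _] [h2 sT2]]]].
    case: (chain t1 t2) => h.
      by apply: sT1; apply: s1 => //; apply: h.
    by apply: sT2; apply: s2 => //; apply: h.
  move=> r x /key [T [_ [[[_ [_ m]] _] [h sT]]]].
  by apply: sT; apply: m.
Qed.

Definition Ustar := fun x => J0 x \/ exists X, tower X /\ X x.

Lemma Ustar_tower : tower Ustar.
Proof. by apply: tw_union. Qed.

Lemma zorn_ideal : exists M, is_maximal_ideal M /\ psub J0 M.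
Proof.
have tU := Ustar_tower.
have [[Ui Un]] := tower_good tU.
exists Ustar; split; last by move=> x hx; left.
split=> //; split=> // K Ki hK nK x Kx.
apply: NNPP => nU.
have bU : bigger Ustar.
  exists K; split=> //; split=> // h; apply: nU; exact: h.
have tS := tw_succ tU.
case: (succ_spec bU) => _ [_ ns]; apply: ns => y hy.
by right; exists (succ Ustar).
Qed.

End Zorn.

Section Ideals.
Variable R : comUnitRingType.
Variable M : R -> Prop.
Hypothesis Mi : is_ideal M.

Lemma idl0 : M 0. Proof. by case: Mi. Qed.
Lemma idlB x y : M x -> M y -> M (x - y). Proof. by case: Mi => _ [h _]; apply: h. Qed.
Lemma idlM r x : M x -> M (r * x). Proof. by case: Mi => _ [_ h]; apply: h. Qed.
Lemma idlMr r x : M x -> M (x * r). Proof. by rewrite mulrC; apply: idlM. Qed.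
Lemma idlN x : M x -> M (- x). Proof. by move=> h; rewrite -sub0r; apply: idlB => //; apply: idl0. Qed.
Lemma idlD x y : M x -> M y -> M (x + y).
Proof. by move=> hx hy; rewrite -[y]opprK; apply: idlB => //; apply: idlN. Qed.

Lemma idl_sum (I : finType) (F : I -> R) : (forall i, M (F i)) -> M (\sum_i F i).
Proof. by move=> h; apply: big_ind => //; [apply: idl0 | apply: idlD]. Qed.

Lemma max_prime : is_maximal_ideal M -> forall a b, M (a * b) -> M a \/ M b.
Proof.
case=> _ [n1 mx] a b hab.
case: (classic (M a)) => ha; first by left.
right.
pose K := fun z => exists m r, M m /\ z = m + r * a.
have Ki : is_ideal K.
  split; first by exists 0, 0; split; [exact: idl0 | rewrite mul0r addr0].
  split.
    move=> x y [m1 [r1 [h1 ->]]] [m2 [r2 [h2' ->]]].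
    exists (m1 - m2), (r1 - r2); split; first exact: idlB.
    by rewrite mulrBl opprD addrACA.
  move=> r x [m1 [r1 [h1 ->]]]; exists (r * m1), (r * r1); split; first exact: idlM.
  by rewrite mulrDr mulrA.
have MK : forall x, M x -> K x by move=> x hx; exists x, 0; rewrite mul0r addr0.
have K1 : K 1.
  apply: NNPP => nK; apply: ha; apply: (mx K Ki MK nK).
  by exists 0, 1; rewrite mul1r add0r; split => //; exact: idl0.
case: K1 => m [r [hm e]].
have -> : b = m * b + r * (a * b) by rewrite mulrA -mulrDl -e mul1r.
by apply: idlD; [apply: idlMr | apply: idlM].
Qed.

Lemma comax (M2 : R -> Prop) x : is_maximal_ideal M -> is_ideal M2 -> M2 x -> ~ M x ->
  exists a b, M a /\ M2 b /\ a + b = 1.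
Proof.
case=> _ [n1 mx] M2i h2x hx.
case: (M2i) => M20 [M2B M2M].
pose K := fun z => exists a b, M a /\ M2 b /\ z = a + b.
have Ki : is_ideal K.
  split; first by exists 0, 0; split; [exact: idl0 | split; [exact: M20 | rewrite addr0]].
  split.
    move=> x1 y [a1 [b1 [h1 [h1' ->]]]] [a2 [b2 [h2 [h2' ->]]]].
    exists (a1 - a2), (b1 - b2); split; first exact: idlB.
    split; first exact: M2B.
    by rewrite opprD addrACA.
  move=> r x1 [a1 [b1 [h1 [h1' ->]]]]; exists (r * a1), (r * b1); split; first exact: idlM.
  by split; [exact: M2M | rewrite mulrDr].
have MK : forall z, M z -> K z by move=> z hz; exists z, 0; rewrite addr0; split => //; split => //; exact: M20.
case: (classic (K 1)) => [[a [b [ha [hb e]]]]|nK]; first by exists a, b.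
exfalso; apply: hx; apply: (mx K Ki MK nK); exists 0, x.
by rewrite add0r; split => //; exact: idl0.
Qed.

End Ideals.

Lemma nonunit_max (R : comUnitRingType) (x : R) : ~ (x \is a GRing.unit) ->
  exists M, is_maximal_ideal M /\ M x.
Proof.
move=> nu.
pose J0 := fun z : R => exists r, z = r * x.
have J0i : is_ideal J0.
  split; first by exists 0; rewrite mul0r.
  split; first by move=> a b [r1 ->] [r2 ->]; exists (r1 - r2); rewrite mulrBl.
  by move=> r a [r1 ->]; exists (r * r1); rewrite mulrA.
have J0p : ~ J0 1.
  case=> r e; apply: nu; apply/unitrPr; exists r; by rewrite mulrC.
have [M [Mm sM]] := zorn_ideal J0i J0p.
by exists M; split => //; apply: sM; exists 1; rewrite mul1r.
Qed.

Section Avoid.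
Variable R : comUnitRingType.
Variable m : nat.
Variable P : 'cV[R]_m -> R.
Variable Good : 'cV[R]_m -> Prop.
Hypothesis Good0 : Good 0.
Hypothesis Goodc : forall w w' (e : R), Good w -> Good w' -> Good (w + e *: (w' - w)).
Hypothesis Pcong : forall M : R -> Prop, is_ideal M -> forall w w' : 'cV[R]_m,
  (forall i, M (w i 0 - w' i 0)) -> M (P w - P w').
Hypothesis Ploc : forall M : R -> Prop, is_maximal_ideal M -> exists w, Good w /\ ~ M (P w).

Lemma avoid k (Ms : nat -> R -> Prop) :
  exists w, Good w /\ forall i, (i < k)%N -> is_maximal_ideal (Ms i) -> ~ Ms i (P w).
Proof.
elim: k => [|k [w [Gw hw]]]; first by exists 0.
case: (classic (is_maximal_ideal (Ms k) /\ Ms k (P w))) => [[Mk Pk]|nk]; last first.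
  exists w; split => // i; rewrite ltnS leq_eqVlt => /orP [/eqP ->|ik] mi; last exact: hw.
  by move=> h; apply: nk.
have Mki : is_ideal (Ms k) by case: Mk.
have [w' [Gw' nw']] := Ploc Mk.
have [e [he1 he2]] : exists e, (forall i, (i < k)%N -> is_maximal_ideal (Ms i) -> Ms i e)
    /\ Ms k (1 - e).
  suff : forall k', (k' <= k)%N -> exists e,
      (forall i, (i < k')%N -> is_maximal_ideal (Ms i) -> Ms i e) /\ Ms k (1 - e).
    by apply.
  elim=> [|k' IH] lek.
    by exists 1; split => //; rewrite subrr; exact: idl0 Mki.
  have [e [h1 h2]] := IH (ltnW lek).
  case: (classic (is_maximal_ideal (Ms k'))) => mk'; last first.
    exists e; split => // i; rewrite ltnS leq_eqVlt => /orP [/eqP ->|ik] mi; [by [] | exact: h1].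
  have mk'i : is_ideal (Ms k') by case: mk'.
  have [a [b [ha [hb ab]]]] := comax mk'i mk' Mki Pk (hw k' lek mk').
  exists (e * a); split.
    move=> i; rewrite ltnS leq_eqVlt => /orP [/eqP ->|ik] mi.
      exact: (idlM mk'i e ha).
    have mii : is_ideal (Ms i) by case: mi.
    by apply: (idlMr mii); apply: h1.
  have hb' : b = 1 - a by rewrite -ab [a + b]addrC addrK.
  have -> : 1 - e * a = (1 - e) + e * b by rewrite hb'; ring.
  by apply: (idlD Mki) => //; apply: (idlM Mki).
exists (w + e *: (w' - w)); split; first exact: Goodc.
move=> i; rewrite ltnS leq_eqVlt => /orP [/eqP ->|ik] mi hP.
  apply: nw'.
  have Mi : is_ideal (Ms k) by [].
  have hc : Ms k (P (w + e *: (w' - w)) - P w').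
    apply: Pcong => // j.
    have -> : (w + e *: (w' - w)) j 0 - w' j 0 = (1 - e) * (w j 0 - w' j 0)
      by rewrite !mxE; ring.
    by apply: (idlMr Mki).
  have -> : P w' = P (w + e *: (w' - w)) - (P (w + e *: (w' - w)) - P w') by ring.
  exact: (idlB Mki).
have Mi : is_ideal (Ms i) by case: mi.
apply: (hw i ik mi).
have hc : Ms i (P (w + e *: (w' - w)) - P w).
  apply: Pcong => // j.
  have -> : (w + e *: (w' - w)) j 0 - w j 0 = e * (w' j 0 - w j 0)
    by rewrite !mxE; ring.
  by apply: (idlMr Mi); apply: he1.
have -> : P w = P (w + e *: (w' - w)) - (P (w + e *: (w' - w)) - P w) by ring.
exact: (idlB Mi).
Qed.

Lemma avoid_unit : semilocal R -> exists w, Good w /\ P w \is a GRing.unit.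
Proof.
case=> k [Ms hMs].
have [w [Gw hw]] := avoid k Ms.
exists w; split => //; apply: NNPP => nu.
have [M [Mm Mx]] := nonunit_max nu.
have [i [ik hi]] := hMs M Mm.
have E : M = Ms i.
  apply: functional_extensionality => x; apply: propositional_extensionality; exact: hi.
by subst M; apply: (hw i ik Mm Mx).
Qed.

End Avoid.

Section Basics.
Variable R : comUnitRingType.
Variable n : nat.
Local Notation N := (n.*2).+1.
Local Notation vec := 'cV[R]_N.
Local Notation mat := 'M[R]_N.
Local Notation bform := (@bform R n).
Local Notation qform := (@qform R n).
Local Notation phi := (@phi_std R n).

Lemma bformDl (a b c : vec) : bform (a + b) c = bform a c + bform b c.
Proof. by rewrite /Defs.bform linearD /= !mulmxDl mxE. Qed.
Lemma bformDr (a b c : vec) : bform a (b + c) = bform a b + bform a c.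
Proof. by rewrite /Defs.bform !mulmxDr mxE. Qed.
Lemma bformZl k (a c : vec) : bform (k *: a) c = k * bform a c.
Proof. by rewrite /Defs.bform linearZ /= -!scalemxAl mxE. Qed.
Lemma bformZr k (a c : vec) : bform a (k *: c) = k * bform a c.
Proof. by rewrite /Defs.bform -!scalemxAr mxE. Qed.
Lemma bformNl (a c : vec) : bform (- a) c = - bform a c.
Proof. by rewrite -scaleN1r bformZl mulN1r. Qed.
Lemma bformNr (a c : vec) : bform a (- c) = - bform a c.
Proof. by rewrite -scaleN1r bformZr mulN1r. Qed.
Lemma bformBl (a b c : vec) : bform (a - b) c = bform a c - bform b c.
Proof. by rewrite bformDl bformNl. Qed.
Lemma bformBr (a b c : vec) : bform a (b - c) = bform a b - bform a c.
Proof. by rewrite bformDr bformNr. Qed.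
Lemma bform0l (c : vec) : bform 0 c = 0.
Proof. by rewrite -(scale0r 0) bformZl mul0r. Qed.
Lemma bform0r (c : vec) : bform c 0 = 0.
Proof. by rewrite -(scale0r 0) bformZr mul0r. Qed.

Lemma phi_sym : phi^T = phi.
Proof.
apply/matrixP=> i j; rewrite !mxE.
by rewrite andbC orbC.
Qed.

Lemma bformE (a b : vec) :
  bform a b = \sum_i \sum_j a i 0 * phi i j * b j 0.
Proof.
rewrite /Defs.bform mxE exchange_big /=; apply: eq_bigr => i _.
rewrite mxE big_distrl /=; apply: eq_bigr => j _.
by rewrite !mxE.
Qed.

Lemma phi_symE i j : phi i j = phi j i.
Proof. by rewrite -[in LHS]phi_sym mxE. Qed.

Lemma bform_sym (a b : vec) : bform a b = bform b a.
Proof.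
rewrite !bformE exchange_big /=; apply: eq_bigr => i _; apply: eq_bigr => j _.
by rewrite (phi_symE j i) [RHS]mulrC [b i 0 * _]mulrC mulrA.
Qed.


Definition ev (j : 'I_N) : vec := delta_mx j 0.

Lemma evE j i : ev j i 0 = (i == j)%:R.
Proof. by rewrite mxE eqxx andbT. Qed.

Lemma bform_row (j : 'I_N) (x : vec) : bform (ev j) x = \sum_l phi j l * x l 0.
Proof.
rewrite bformE (bigD1 j) //=.
rewrite [X in _ + X]big1 => [|i ij]; last first.
  by rewrite big1 // => l _; rewrite evE (negbTE ij) !mul0r.
by rewrite addr0; apply: eq_bigr => l _; rewrite evE eqxx mul1r.
Qed.

Definition pt (j : 'I_N) : 'I_N := inord (if odd j then j.+1 else j.-1).

Lemma pt_val (j : 'I_N) : (0 < j)%N -> (pt j : nat) = if odd j then j.+1 else j.-1.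
Proof.
move=> j0; rewrite /pt inordK //; have jN := ltn_ord j.
case: ifP => oj; last by rewrite (leq_ltn_trans (leq_pred _) jN).
have : j != n.*2 :> nat by apply/negP => /eqP e; move: oj; rewrite e odd_double.
move: jN; rewrite ltnS leq_eqVlt => /orP [->//|]; by [].
Qed.

Lemma pt_valv (j : 'I_N) : (0 < j)%N -> val (pt j) = if odd j then j.+1 else j.-1.
Proof. exact: pt_val. Qed.

Lemma pt_pos (j : 'I_N) : (0 < j)%N -> (0 < pt j)%N.
Proof.
move=> j0; rewrite pt_val //; case: ifP => // oj.
by move: j0 oj; case: (nat_of_ord j) => [|[|m]].
Qed.

Lemma pt_odd (j : 'I_N) : (0 < j)%N -> odd (pt j) = ~~ odd j.
Proof.
move=> j0; rewrite pt_val //; case: ifP => oj /=; first by rewrite oj.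
by move: j0 oj; case: (nat_of_ord j) => [|m] //= _; case: (odd m).
Qed.

Lemma ptK (j : 'I_N) : (0 < j)%N -> pt (pt j) = j.
Proof.
move=> j0; apply: val_inj => /=; rewrite (pt_val (pt_pos j0)) pt_odd //.
have E : val (pt j) = (if odd j then j.+1 else j.-1) := pt_val j0. rewrite E; case: (odd j) => //=.
by move: j0; case: (nat_of_ord j).
Qed.

Lemma pt_neq (j : 'I_N) : (0 < j)%N -> pt j != j.
Proof.
move=> j0; apply/negP => /eqP e.
by move: (pt_odd j0); rewrite e; case: (odd j).
Qed.

Lemma phi_row (j l : 'I_N) : (0 < j)%N -> phi j l = (l == pt j)%:R.
Proof.
move=> j0; rewrite mxE.
have -> : (j == 0 :> nat) = false by rewrite eqn0Ngt j0.
rewrite /= -(inj_eq val_inj) pt_valv //.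
case: (boolP (odd j)) => oj /=.
  have -> : odd l && (j == l.+1 :> nat) = false.
    apply/negP => /andP [ol /eqP e]; by move: oj; rewrite e /= ol.
  by rewrite orbF; case: (_ == _).
move: j0 oj; case: (nat_of_ord j) => [|m] //= _ om.
have {}om : odd m by move: om; case: (odd m).
rewrite eqSS; case: (eqVneq (val l) m) => [E|ne]; last by rewrite andbF.
by move: om; rewrite -E andbT => ->.
Qed.

Lemma phi_row0 (l : 'I_N) : phi 0 l = (l == 0)%:R * 2%:R.
Proof.
rewrite mxE /= -(inj_eq val_inj) /=.
by case: (l == 0 :> nat); rewrite ?mul1r ?mul0r // andbF.
Qed.

Lemma bform_e0 (x : vec) : bform (ev 0) x = 2%:R * x 0 0.
Proof.
rewrite bform_row (bigD1 0) //= [X in _ + X]big1 => [|l l0].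
  by rewrite phi_row0 eqxx mul1r addr0.
by rewrite phi_row0 (negbTE l0) !mul0r.
Qed.

Lemma bform_e (j : 'I_N) (x : vec) : (0 < j)%N -> bform (ev j) x = x (pt j) 0.
Proof.
move=> j0; rewrite bform_row (bigD1 (pt j)) //= [X in _ + X]big1 => [|l l0].
  by rewrite phi_row // eqxx mul1r addr0.
by rewrite phi_row // (negbTE l0) !mul0r.
Qed.

Lemma bform_e0r (x : vec) : bform x (ev 0) = 2%:R * x 0 0.
Proof. by rewrite bform_sym bform_e0. Qed.
Lemma bform_er (j : 'I_N) (x : vec) : (0 < j)%N -> bform x (ev j) = x (pt j) 0.
Proof. by move=> j0; rewrite bform_sym bform_e. Qed.

Lemma mx_ext (A B : mat) : (forall x : vec, A *m x = B *m x) -> A = B.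
Proof.
move=> h; apply/matrixP=> i j.
have := congr1 (fun M : vec => M i 0) (h (delta_mx j 0)).
by rewrite -!colE !mxE.
Qed.

Lemma ESD_apply (u v x : vec) :
  ESD u v *m x = x + bform v x *: u - bform u x *: v - (qform v * bform u x) *: u.
Proof.
have H : forall a b : vec, a *m (b^T *m phi) *m x = bform b x *: a.
  by move=> a b; rewrite -mulmxA (mx11_scalar (b^T *m phi *m x)) mul_mx_scalar.
rewrite /ESD !mulmxDl !mulNmx mul1mx !H -scalemxAl H scalerA.
by [].
Qed.


Variable h2 : (2%:R : R) \is a GRing.unit.

Lemma qformE (v : vec) : bform v v = 2%:R * qform v.
Proof. by rewrite /Defs.qform mulrA mulrV // mul1r. Qed.

Lemma qformD (a b : vec) : qform (a + b) = qform a + qform b + bform a b.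
Proof.
rewrite /Defs.qform bformDl !bformDr (bform_sym b a).
have -> : bform a a + bform a b + (bform a b + bform b b) =
          bform a a + bform b b + 2%:R * bform a b by ring.
by rewrite !mulrDr mulrA mulVr // mul1r.
Qed.

Lemma qformZ k (a : vec) : qform (k *: a) = k ^+ 2 * qform a.
Proof. rewrite /Defs.qform bformZl bformZr; ring. Qed.

Lemma qform0 : qform 0 = 0.
Proof. by rewrite /Defs.qform bform0l mulr0. Qed.

Lemma ESD0 (u : vec) : ESD u 0 = 1%:M.
Proof.
apply: mx_ext => x; rewrite ESD_apply mul1mx bform0l qform0 !scale0r scaler0 mul0r scale0r.
by rewrite !subr0 addr0.
Qed.

Lemma ESD_add (u v1 v2 : vec) : bform u u = 0 -> bform u v1 = 0 -> bform u v2 = 0 ->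
  ESD u (v1 + v2) = ESD u v1 *m ESD u v2.
Proof.
move=> huu h1 h2'; apply: mx_ext => x; rewrite -mulmxA !ESD_apply.
rewrite !bformDr ?bformNr !bformZr !bformDl qformD huu h2' (bform_sym v1 u) h1.
apply/matrixP => i j; rewrite !mxE; ring.
Qed.

Lemma ESD_unit (u v : vec) : bform u u = 0 -> bform u v = 0 -> ESD u v \in unitmx.
Proof.
move=> huu huv.
have : ESD u v *m ESD u (- v) = 1%:M by rewrite -ESD_add ?bformNr ?huv ?oppr0 // subrr ESD0.
by case/mulmx1_unit.
Qed.

Definition preserves (g : mat) := forall x y : vec, bform (g *m x) (g *m y) = bform x y.

Lemma ESD_pres (u v : vec) : bform u u = 0 -> bform u v = 0 -> preserves (ESD u v).
Proof.
move=> huu huv x y; rewrite !ESD_apply.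
rewrite !bformDl ?bformNl !bformDr ?bformNr !bformZl !bformZr.
rewrite huu huv (bform_sym v u) huv qformE ?(bform_sym x u) ?(bform_sym x v) ?(bform_sym y u) ?(bform_sym y v).
ring.
Qed.

Lemma pres_mul (g h : mat) : preserves g -> preserves h -> preserves (g *m h).
Proof. by move=> pg ph x y; rewrite -!mulmxA pg ph. Qed.

Lemma ESD_conj (g : mat) (u v : vec) : preserves g ->
  g *m ESD u v = ESD (g *m u) (g *m v) *m g.
Proof.
move=> pg; apply: mx_ext => x; rewrite -!mulmxA !ESD_apply.
rewrite /Defs.qform !pg !mulmxDr !mulmxN -!scalemxAr.
by [].
Qed.

Lemma ESD_scale (a : R) (u w : vec) : ESD (a *: u) w = ESD u (a *: w).
Proof.
apply: mx_ext => x; rewrite !ESD_apply qformZ !bformZl.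
apply/matrixP => i j; rewrite !mxE; ring.
Qed.

Lemma ESD_self (c : R) (u : vec) : bform u u = 0 -> ESD u (c *: u) = 1%:M.
Proof.
move=> huu; apply: mx_ext => x; rewrite !ESD_apply mul1mx qformZ /Defs.qform huu bformZl.
apply/matrixP => i j; rewrite !mxE; ring.
Qed.


Lemma delta_mul (a b : 'I_N) (x : vec) : delta_mx a b *m x = x b 0 *: ev a.
Proof.
rewrite -(mul_delta_mx (0 : 'I_1) a b) -mulmxA -rowE (mx11_scalar (row b x)) mul_mx_scalar.
by rewrite mxE.
Qed.

Lemma ev_iso (q : 'I_N) : (0 < q)%N -> bform (ev q) (ev q) = 0.
Proof. by move=> q0; rewrite bform_e // evE (negbTE (pt_neq q0)). Qed.

Lemma ev_orth0 (q : 'I_N) c : (0 < q)%N -> bform (ev q) (c *: ev 0) = 0.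
Proof.
move=> q0; rewrite bformZr bform_e // evE.
by rewrite -(inj_eq val_inj) /= eqn0Ngt pt_pos // mulr0.
Qed.

Lemma qform_e0 : qform (ev 0) = 1.
Proof. by rewrite /Defs.qform bform_e0 evE eqxx mulr1 mulVr. Qed.

Lemma inord0N : (inord 0 : 'I_N) = 0.
Proof. by apply: val_inj; rewrite /= inordK. Qed.

Lemma odd_dpred i : (0 < i)%N -> odd i.*2.-1.
Proof. by case: i => // m _; rewrite doubleS /= odd_double. Qed.
Lemma dpredS i : (0 < i)%N -> (i.*2.-1).+1 = i.*2.
Proof. by case: i => // m _; rewrite doubleS. Qed.
Lemma dpred_pos i : (0 < i)%N -> (0 < i.*2.-1)%N.
Proof. by case: i => // m _; rewrite doubleS. Qed.

Lemma F1_ESD i lam : (1 <= i <= n)%N ->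
  F1 n i lam = ESD (ev (inord i.*2.-1)) ((- lam) *: ev 0).
Proof.
case/andP => i1 iN.
have iN' : (i.*2.-1 < N)%N by rewrite ltnS (leq_trans (leq_pred _)) // leq_double.
have q0 : (0 < (inord i.*2.-1 : 'I_N))%N by rewrite inordK // dpred_pos.
have ptq : pt (inord i.*2.-1) = inord i.*2.
  by apply: val_inj; rewrite pt_valv //= (inordK iN') odd_dpred // dpredS // inordK // ltnS leq_double.
apply: mx_ext => x; rewrite ESD_apply /F1 /E mulmxDl mul1mx -scalemxAl !mulmxDl !mulNmx.
rewrite -!scalemxAl !delta_mul inord0N bformZl bform_e0 bform_e // ptq qformZ qform_e0.
rewrite -[(i.*2.+1).-1]/(i.*2).
apply/matrixP => a b; rewrite !mxE; ring.
Qed.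

Lemma F2_ESD i lam : (1 <= i <= n)%N ->
  F2 n i lam = ESD (ev (inord i.*2)) ((- lam) *: ev 0).
Proof.
case/andP => i1 iN.
have iN' : (i.*2 < N)%N by rewrite ltnS leq_double.
have q0 : (0 < (inord i.*2 : 'I_N))%N.
  by rewrite inordK //; move: i1; case: (i) => //.
have ptq : pt (inord i.*2) = inord i.*2.-1.
  apply: val_inj; rewrite pt_valv // inordK // odd_double /=.
  by rewrite inordK // (leq_ltn_trans (leq_pred _)).
apply: mx_ext => x; rewrite ESD_apply /F2 /E mulmxDl mul1mx -scalemxAl !mulmxDl !mulNmx.
rewrite -!scalemxAl !delta_mul inord0N bformZl bform_e0 bform_e // ptq qformZ qform_e0.
apply/matrixP => a b; rewrite !mxE; ring.
Qed.


Lemma q1_pos i : (1 <= i <= n)%N -> (0 < (inord i.*2.-1 : 'I_N))%N.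
Proof.
case/andP => i1 iN.
have iN' : (i.*2.-1 < N)%N by rewrite ltnS (leq_trans (leq_pred _)) // leq_double.
by rewrite inordK // dpred_pos.
Qed.

Lemma q2_pos i : (1 <= i <= n)%N -> (0 < (inord i.*2 : 'I_N))%N.
Proof.
case/andP => i1 iN.
have iN' : (i.*2 < N)%N by rewrite ltnS leq_double.
by rewrite inordK //; move: i1; case: (i).
Qed.

Lemma gen_ESD (J : R -> Prop) (g : mat) : elem_gens J g ->
  exists (q : 'I_N) c, (0 < q)%N /\ g = ESD (ev q) (c *: ev 0).
Proof.
case=> i [lam [hi [_ [->|->]]]].
  by exists (inord i.*2.-1), (- lam); rewrite F1_ESD // q1_pos.
by exists (inord i.*2), (- lam); rewrite F2_ESD // q2_pos.
Qed.

Lemma ESDe_unit (q : 'I_N) c : (0 < q)%N -> ESD (ev q) (c *: ev 0) \in unitmx.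
Proof. by move=> q0; apply: ESD_unit; [apply: ev_iso | apply: ev_orth0]. Qed.

Lemma ESDe_pres (q : 'I_N) c : (0 < q)%N -> preserves (ESD (ev q) (c *: ev 0)).
Proof. by move=> q0; apply: ESD_pres; [apply: ev_iso | apply: ev_orth0]. Qed.

Lemma pres_inv (g : mat) : g \in unitmx -> preserves g -> preserves (invmx g).
Proof.
by move=> gu pg x y; rewrite -pg !mulKVmx.
Qed.

Lemma EO_unit (J : R -> Prop) (g : mat) : EO J g -> g \in unitmx.
Proof.
elim=> [x /gen_ESD [q [c [q0 ->]]]| |x y _ ux _ uy|x _ ux].
- exact: ESDe_unit.
- exact: unitmx1.
- by rewrite unitmx_mul ux uy.
- by rewrite unitmx_inv.
Qed.

Lemma EO_pres (J : R -> Prop) (g : mat) : EO J g -> preserves g.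
Proof.
elim=> [x /gen_ESD [q [c [q0 ->]]]| |x y _ ux _ uy|x Ex ux].
- exact: ESDe_pres.
- by move=> a b; rewrite !mul1mx.
- exact: pres_mul.
- by apply: pres_inv => //; apply: EO_unit Ex.
Qed.

Lemma invmx_uniq (A C : mat) : A \in unitmx -> A *m C = 1%:M -> C = invmx A.
Proof. by move=> uA h; rewrite -(mulKmx uA C) h mulmx1. Qed.

Lemma invmxM (A B : mat) : A \in unitmx -> B \in unitmx ->
  invmx (A *m B) = invmx B *m invmx A.
Proof.
move=> uA uB; apply/esym/invmx_uniq; first by rewrite unitmx_mul uA uB.
by rewrite -mulmxA (mulmxA B) mulmxV // mul1mx mulmxV.
Qed.

Lemma EO_rel_unit (I : R -> Prop) (g : mat) : EO_rel I g -> g \in unitmx.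
Proof.
elim=> [x [a [h [Ea [Eh ->]]]]| |x y _ ux _ uy|x _ ux].
- by rewrite !unitmx_mul unitmx_inv (EO_unit Ea) (EO_unit Eh).
- exact: unitmx1.
- by rewrite unitmx_mul ux uy.
- by rewrite unitmx_inv.
Qed.

Lemma EO_rel_conj (I : R -> Prop) (a x : mat) : EO (fun _ => True) a -> EO_rel I x ->
  EO_rel I (a *m x *m invmx a).
Proof.
move=> Ea Ex; have ua := EO_unit Ea.
elim: Ex => [y [b [h [Eb [Eh ->]]]]| |y z Ey IHy Ez IHz|y Ey IHy].
- apply: gg_gen; exists (a *m b), h; split; first exact: gg_mul.
  split=> //; rewrite invmxM ?(EO_unit Eb) //.
  by rewrite !mulmxA.
- by rewrite mulmx1 mulmxV //; apply: gg_one.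
- have -> : a *m (y *m z) *m invmx a = (a *m y *m invmx a) *m (a *m z *m invmx a).
    by rewrite !mulmxA mulmxKV // -!mulmxA.
  exact: gg_mul.
- have uy := EO_rel_unit Ey.
  have -> : a *m invmx y *m invmx a = invmx (a *m y *m invmx a).
    by rewrite !invmxM ?unitmx_mul ?unitmx_inv ?ua ?uy // invmxK mulmxA.
  exact: gg_inv.
Qed.


Lemma vec_sum (w : vec) : w = \sum_i w i 0 *: ev i.
Proof.
apply/matrixP => a b; rewrite ord1 summxE (bigD1 a) //= [X in _ + X]big1 => [|i ia].
  by rewrite !mxE eqxx mulr1 addr0.
by rewrite !mxE eq_sym (negbTE ia) mulr0.
Qed.

Lemma ev_e0 (q : 'I_N) : (0 < q)%N -> bform (ev q) (ev 0) = 0.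
Proof. by move=> q0; rewrite -[ev 0]scale1r ev_orth0. Qed.

Lemma ev_ev (p q : 'I_N) : (0 < p)%N -> pt p != q -> bform (ev p) (ev q) = 0.
Proof. by move=> p0 ne; rewrite bform_e // evE (negbTE ne). Qed.

Lemma unified (G : mat -> Prop) (J : R -> Prop) (p : 'I_N) :
  G 1%:M -> (forall x y, G x -> G y -> G (x *m y)) -> (forall x, G x -> G (invmx x)) ->
  (0 < p)%N -> (p <= 2)%N -> (pt p <= 2)%N ->
  (forall c, J c -> G (ESD (ev p) (c *: ev 0))) ->
  (forall q : 'I_N, (2 < q)%N -> forall x, G x ->
     G (ESD (ev q) (2%:R^-1 *: ev 0) *m x *m invmx (ESD (ev q) (2%:R^-1 *: ev 0)))) ->
  forall w : vec, (forall i, J (w i 0)) -> bform (ev p) w = 0 -> G (ESD (ev p) w).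
Proof.
move=> G1 Gm Gi p0 p2 pp2 H1 H2.
have pp0 := pt_pos p0.
have epp := ev_iso p0.
have Sa : forall q : 'I_N, (2 < q)%N -> forall c, J c -> G (ESD (ev p) (c *: ev q)).
  move=> q q2 c Jc.
  have q0 : (0 < q)%N by apply: leq_trans q2.
  set X := ESD (ev p) (c *: ev 0).
  set g := ESD (ev q) (2%:R^-1 *: ev 0).
  have gu : g \in unitmx by apply: ESDe_unit.
  have gp : preserves g by apply: ESDe_pres.
  have Xu : X \in unitmx by apply: ESD_unit => //; apply: ev_orth0.
  have ptqp : pt q != p.
    apply/negP => /eqP e; move: q2; rewrite -(ptK q0) e.
    by rewrite ltnNge pp2.
  have ptpq : pt p != q.
    by apply/negP => /eqP e; move: q2; rewrite -e ltnNge pp2.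
  have gep : g *m ev p = ev p.
    rewrite ESD_apply bformZl (bform_sym (ev 0)) ev_e0 // ev_ev //.
    by rewrite !mulr0 !scale0r !subr0 addr0.

  have ge0 : g *m ev 0 = ev 0 + ev q.
    rewrite ESD_apply bformZl bform_e0 evE eqxx mulr1 mulVr // scale1r ev_e0 //.
    by rewrite !scale0r mulr0 scale0r !subr0.
  have E1 : g *m X *m invmx g = ESD (ev p) (c *: ev 0 + c *: ev q).
    rewrite ESD_conj // mulmxK // gep -scalemxAr ge0 scalerDr //.
  have E2 : ESD (ev p) (c *: ev q) = invmx X *m (g *m X *m invmx g).
    rewrite E1 ESD_add //; first by rewrite mulKmx.
      by apply: ev_orth0.
    by rewrite bformZr ev_ev // mulr0.
  by rewrite E2; apply: Gm; [exact: Gi (H1 _ Jc) | exact: H2 _ q2 _ (H1 _ Jc)].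
move=> w Jw hw.
rewrite [w]vec_sum.
pose Pr (S : vec) := bform (ev p) S = 0 /\ G (ESD (ev p) S).
suff : Pr (\sum_i w i 0 *: ev i) by case.
apply: (big_ind Pr).
- by split; [rewrite bform0r | rewrite ESD0].
- move=> a b [ha Ga] [hb Gb]; split; first by rewrite bformDr ha hb addr0.
  by rewrite ESD_add //; apply: Gm.
move=> i _.
have hpt : w (pt p) 0 = 0 by rewrite -bform_e.
case: (eqVneq (val i) 0) => [i0|i0].
  have -> : i = 0 by apply: val_inj.
  by split; [apply: ev_orth0 | apply: H1].
case: (eqVneq i p) => [->|ip].
  by split; [rewrite bformZr epp mulr0 | rewrite ESD_self].
case: (eqVneq i (pt p)) => [->|ipp].
  by rewrite hpt scale0r; split; [rewrite bform0r | rewrite ESD0].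
have i2 : (2 < i)%N.
  have ptpp : (pt p : nat) != p by rewrite (inj_eq val_inj) pt_neq.
  move: i0 ip ipp ptpp; rewrite -!(inj_eq val_inj) /=.
  move: p0 p2 pp0 pp2; clear; move: (nat_of_ord i) (nat_of_ord p) (nat_of_ord (pt p)).
  by move=> a b c; case: a => [|[|[|a]]] //; case: b => [|[|[|b]]] //; case: c => [|[|[|c]]].
split; last by apply: Sa.
by rewrite bformZr ev_ev ?mulr0 // eq_sym.
Qed.


Variable n1 : (1 <= n)%N.

Definition o1 : 'I_N := inord 1.
Definition o2 : 'I_N := inord 2.

Lemma o1v : (o1 : nat) = 1%N.
Proof. by rewrite /o1 inordK // ltnS -addnn; apply: leq_trans n1 (leq_addr _ _). Qed.
Lemma o2v : (o2 : nat) = 2%N.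
Proof. by rewrite /o2 inordK // ltnS -addnn; apply: leq_add n1 n1. Qed.
Lemma o1pos : (0 < o1)%N. Proof. by rewrite o1v. Qed.
Lemma o2pos : (0 < o2)%N. Proof. by rewrite o2v. Qed.

Lemma pt_o1 : pt o1 = o2.
Proof. by apply: val_inj; rewrite /= pt_val ?o1pos // o1v o2v. Qed.
Lemma pt_o2 : pt o2 = o1.
Proof. by apply: val_inj; rewrite /= pt_val ?o2pos // o1v o2v. Qed.

Lemma o1_0 : (o1 == 0) = false. Proof. by rewrite -(inj_eq val_inj) /= o1v. Qed.
Lemma o2_0 : (o2 == 0) = false. Proof. by rewrite -(inj_eq val_inj) /= o2v. Qed.
Lemma o0_1 : ((0 : 'I_N) == o1) = false. Proof. by rewrite eq_sym o1_0. Qed.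
Lemma o0_2 : ((0 : 'I_N) == o2) = false. Proof. by rewrite eq_sym o2_0. Qed.
Lemma o1_2 : (o1 == o2) = false. Proof. by rewrite -(inj_eq val_inj) /= o1v o2v. Qed.
Lemma o2_1 : (o2 == o1) = false. Proof. by rewrite eq_sym o1_2. Qed.

Lemma pt_gt2 (j : 'I_N) : (2 < j)%N -> (2 < pt j)%N.
Proof.
move=> j2; rewrite pt_val ?(leq_trans _ j2) //.
case: ifP => oj; first by rewrite ltnW.
by move: j2 oj; case: (nat_of_ord j) => [|[|[|[|k]]]].
Qed.

Lemma neq_gt2 (j a : 'I_N) : (2 < j)%N -> (a : nat) = 0%N \/ (a : nat) = 1%N \/ (a : nat) = 2%N ->
  (j == a) = false.
Proof.
move=> j2 ha; apply/negP => /eqP e; move: j2; rewrite e.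
by case: ha => [->|[->|->]].
Qed.

Lemma bform_idl (M : R -> Prop) (Mi : is_ideal M) (d x : vec) :
  (forall i, M (d i 0)) -> M (bform d x) /\ M (bform x d).
Proof.
move=> hd; rewrite !bformE; split; apply: (idl_sum Mi) => i; apply: (idl_sum Mi) => j.
  by rewrite -mulrA mulrC; apply: (idlM Mi).
by apply: (idlM Mi).
Qed.

Definition Pf (u w : vec) : R := (ESD (ev o1) w *m u) o1 0.

Lemma PfE (u w : vec) :
  Pf u w = u o1 0 + bform w u - w o1 0 * u o2 0 - qform w * u o2 0.
Proof.
rewrite /Pf ESD_apply bform_e ?o1pos // pt_o1 !mxE !eqxx /= mulr1 mulr1 (mulrC (u o2 0)).
by [].
Qed.

Lemma Pcong (u : vec) (M : R -> Prop) : is_ideal M -> forall w w' : vec,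
  (forall i, M (w i 0 - w' i 0)) -> M (Pf u w - Pf u w').
Proof.
move=> Mi w w' hd.
set d := w - w'.
have hd' : forall i, M (d i 0) by move=> i; rewrite !mxE; apply: hd.
have ew : w = w' + d by rewrite /d addrC subrK.
have [h1 h2'] := bform_idl Mi u hd'.
have [h3 h4] := bform_idl Mi w' hd'.
have [h5 h6] := bform_idl Mi d hd'.
rewrite !PfE ew qformD bformDl [(w' + d) o1 0]mxE.
have -> : u o1 0 + (bform w' u + bform d u) - (w' o1 0 + d o1 0) * u o2 0 -
  (qform w' + qform d + bform w' d) * u o2 0 -
  (u o1 0 + bform w' u - w' o1 0 * u o2 0 - qform w' * u o2 0) =
  bform d u - d o1 0 * u o2 0 - (qform d + bform w' d) * u o2 0 by ring.
apply: (idlB Mi); first apply: (idlB Mi) => //.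
  by apply: (idlMr Mi).
apply: (idlMr Mi); apply: (idlD Mi) => //.
by rewrite /Defs.qform; apply: (idlM Mi).
Qed.

Lemma Ploc (u : vec) : unimodular u -> bform u u = 0 ->
  forall M : R -> Prop, is_maximal_ideal M -> exists w : vec, w o2 0 = 0 /\ ~ M (Pf u w).
Proof.
move=> [z hz] huu M Mm.
have Mi : is_ideal M by case: Mm.
have M1 : ~ M 1 by case: Mm => _ [].
case: (classic (M (u o1 0))) => h1; last first.
  exists 0; split; first by rewrite mxE.
  by rewrite PfE bform0l qform0 mxE !mul0r !subr0 addr0.
case: (classic (exists j : 'I_N, (2 < j)%N /\ ~ M (u j 0))) => [[j [j2 hj]]|hall].
  have j0 : (0 < j)%N by apply: leq_trans j2.
  have pj2 := pt_gt2 j2.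
  have pj0 : (0 < pt j)%N by apply: leq_trans pj2.
  exists (ev (pt j)); split.
    by rewrite evE eq_sym neq_gt2 //; right; right; rewrite o2v.
  rewrite PfE bform_sym bform_er // ptK // /Defs.qform ev_iso // mulr0 mul0r.
  rewrite evE eq_sym neq_gt2 //; last by right; left; rewrite o1v.
  rewrite mul0r !subr0 => hP; apply: hj.
  have -> : u j 0 = (u o1 0 + u j 0) - u o1 0 by ring.
  exact: (idlB Mi).
have hj : forall j : 'I_N, (2 < j)%N -> M (u j 0).
  by move=> j j2; apply: NNPP => nj; apply: hall; exists j.
set s : vec := u 0 0 *: ev 0 + u o1 0 *: ev o1 + u o2 0 *: ev o2.
set d := u - s.
have hd : forall i, M (d i 0).
  move=> i; rewrite !mxE !eqxx !andbT.
  case: (eqVneq i 0) => [->|i0].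
    by rewrite ?eqxx ?o0_1 ?o0_2 ?o1_0 ?o1_2 ?o2_0 ?o2_1 ?mulr1 ?mulr0 ?addr0 ?add0r subrr; exact: idl0 Mi.
  case: (eqVneq i o1) => [->|i1].
    by rewrite ?eqxx ?o0_1 ?o0_2 ?o1_0 ?o1_2 ?o2_0 ?o2_1 ?mulr1 ?mulr0 ?addr0 ?add0r subrr; exact: idl0 Mi.
  case: (eqVneq i o2) => [->|i2].
    by rewrite ?eqxx ?o0_1 ?o0_2 ?o1_0 ?o1_2 ?o2_0 ?o2_1 ?mulr1 ?mulr0 ?addr0 ?add0r subrr; exact: idl0 Mi.
  rewrite !mulr0 !addr0 subr0; apply: hj.
  move: i0 i1 i2; rewrite -!(inj_eq val_inj) /= o1v o2v.
  by case: (nat_of_ord i) => [|[|[|k]]].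
have ud : u = s + d by rewrite /d addrC subrK.
have [hd1 hd2] := bform_idl Mi s hd.
have [hd3 hd4] := bform_idl Mi u hd.
have ess : bform s s = 2%:R * (u 0 0 * u 0 0) + 2%:R * (u o1 0 * u o2 0).
  rewrite /s !bformDl !bformDr !bformZl !bformZr !bform_e0 !bform_e ?o1pos ?o2pos //.
  rewrite pt_o1 pt_o2 !evE !eqxx o0_1 o0_2 o1_0 o2_0 o1_2 o2_1 /=.
  ring.
have Mss : M (bform s s).
  have -> : bform s s = bform u u - bform d u - bform s d.
    by rewrite {1 2}ud bformDl bformDr -ud; ring.
  by rewrite huu; apply: (idlB Mi) => //; apply: (idlB Mi) => //; exact: idl0 Mi.
have M0 : M (u 0 0).
  have M00 : M (u 0 0 * u 0 0).
    have -> : u 0 0 * u 0 0 = 2%:R^-1 * (bform s s - 2%:R * u o2 0 * u o1 0).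
      by rewrite ess mulrA; apply/esym; rewrite [X in X = _](_ : _ = 2%:R^-1 * 2%:R * (u 0 0 * u 0 0)); [rewrite mulVr // mul1r | ring].
    apply: (idlM Mi); apply: (idlB Mi) => //; exact: (idlM Mi).
  by case: (max_prime Mi Mm M00).
have n2 : ~ M (u o2 0).
  move=> h2M; apply: M1; rewrite -hz; apply: (idl_sum Mi) => i; apply: (idlMr Mi).
  case: (eqVneq i 0) => [->//|i0].
  case: (eqVneq i o1) => [->//|i1].
  case: (eqVneq i o2) => [->//|i2].
  apply: hj; move: i0 i1 i2; rewrite -!(inj_eq val_inj) /= o1v o2v.
  by case: (nat_of_ord i) => [|[|[|k]]].
exists (ev 0); split; first by rewrite evE o2_0.
rewrite PfE bform_e0 qform_e0 evE o1_0 mul0r subr0 mul1r => hP; apply: n2.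
have -> : u o2 0 = u o1 0 + 2%:R * u 0 0 - (u o1 0 + 2%:R * u 0 0 - u o2 0) by ring.
apply: (idlB Mi) => //; apply: (idlD Mi) => //; exact: (idlM Mi).
Qed.

Lemma gq_gen (q : 'I_N) c : (0 < q)%N -> exists k, (1 <= k <= n)%N /\
  (ESD (ev q) (c *: ev 0) = F1 n k (- c) \/ ESD (ev q) (c *: ev 0) = F2 n k (- c)).
Proof.
move=> q0; have qN : (q <= n.*2)%N by rewrite -ltnS.
have hq := odd_double_half q.
set t := q./2 in hq *.
have qv : (q < N)%N := ltn_ord q.
case: (boolP (odd q)) => oq.
  rewrite oq /= in hq.
  have kb : (1 <= t.+1 <= n)%N by lia.
  exists t.+1; split => //.
  left; rewrite F1_ESD ?opprK //.
  by congr ESD; congr ev; apply: val_inj => /=; rewrite inordK; lia.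
rewrite (negbTE oq) /= in hq.
have kb : (1 <= t <= n)%N by lia.
exists t; split => //.
right; rewrite F2_ESD ?opprK //.
by congr ESD; congr ev; apply: val_inj => /=; rewrite inordK; lia.
Qed.

Lemma vec_id (x e1 e2 : vec) (a b c g : R) :
  x + b *: e2 - a *: (a^-1 *: (x - a *: e1 - c *: e2)) - g *: e2 = a *: e1 + (c + b - g) *: e2 ->
  True.
Proof. by []. Qed.

Lemma vec_id2 (x e1 e2 : vec) (a b c g : R) :
  x + b *: e2 - (x - a *: e1 - c *: e2) - g *: e2 = a *: e1 + (c + b - g) *: e2.
Proof. by apply/matrixP => i j; rewrite !mxE; ring. Qed.

Lemma F1o1 c : ESD (ev o1) (c *: ev 0) = F1 n 1 (- c).
Proof. by rewrite F1_ESD ?opprK /= ?n1 //. Qed.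
Lemma F2o2 c : ESD (ev o2) (c *: ev 0) = F2 n 1 (- c).
Proof. by rewrite F2_ESD ?opprK /= ?n1 //. Qed.

Lemma main_sec (I : R -> Prop) (u v : vec) : semilocal R -> is_ideal I ->
  unimodular u -> qform u = 0 -> (forall i, I (v i 0)) -> bform u v = 0 ->
  EO_rel I (ESD u v).
Proof.
move=> SL Ii hun hq hv huv.
have huu : bform u u = 0 by rewrite qformE hq mulr0.
have b1 : (1 <= 1 <= n)%N by rewrite /= n1.
have genR : forall (q : 'I_N) c, (0 < q)%N -> EO (fun _ => True) (ESD (ev q) (c *: ev 0)).
  move=> q c q0; have [k [hk [E|E]]] := gq_gen c q0; rewrite E; apply: gg_gen; exists k, (- c).
    by split => //; split => //; left.
  by split => //; split => //; right.
have unifR : forall p : 'I_N, (p = o1 \/ p = o2) -> forall w : vec, bform (ev p) w = 0 ->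
    EO (fun _ => True) (ESD (ev p) w).
  move=> p hp w hw.
  have p0 : (0 < p)%N by case: hp => ->; [apply: o1pos | apply: o2pos].
  apply: (unified (G := EO (fun _ => True)) (J := fun _ => True) (p := p)) => //.
  - exact: gg_one.
  - by move=> x y; apply: gg_mul.
  - by move=> x; apply: gg_inv.
  - by case: hp => ->; rewrite ?o1v ?o2v.
  - by case: hp => ->; rewrite ?pt_o1 ?pt_o2 ?o1v ?o2v.
  - by move=> c _; apply: genR.
  - move=> q q2 x Ex; have q0 : (0 < q)%N by apply: leq_trans q2.
    by apply: gg_mul; [apply: gg_mul => //; apply: genR | apply: gg_inv; apply: genR].
have Good0 : (0 : vec) o2 0 = 0 by rewrite mxE.
have Goodc : forall (w w' : vec) (e : R), w o2 0 = 0 -> w' o2 0 = 0 ->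
    (w + e *: (w' - w)) o2 0 = 0.
  by move=> w w' e h h'; rewrite !mxE h h' subrr mulr0 addr0.
have [w [Gw Pu]] := avoid_unit Good0 Goodc (@Pcong u) (Ploc hun huu) SL.
set a := Pf u w in Pu.
set h := ESD (ev o1) w.
have Eh : EO (fun _ => True) h by apply: unifR; [left | rewrite bform_e ?o1pos // pt_o1].
set u' := h *m u.
have ua : u' o1 0 = a by [].
have u'E : h *m u = u' by [].
clearbody u'.
set w2 := a^-1 *: (u' - a *: ev o1 - u' o2 0 *: ev o2).
have hw2 : bform (ev o2) w2 = 0.
  rewrite bform_e ?o2pos // pt_o2 /w2 !mxE ua !eqxx o1_2 /=.
  by rewrite mulr1 mulr0 subr0 subrr mulr0.
have aw2 : a *: w2 = u' - a *: ev o1 - u' o2 0 *: ev o2.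
  by rewrite /w2 scalerA mulrV // scale1r.
set g2 := ESD (ev o2) w2.
have Eg2 : EO (fun _ => True) g2 by apply: unifR; [right|].
set G := g2 *m h.
have EG : EO (fun _ => True) G by apply: gg_mul.
have pG := EO_pres EG.
have uG := EO_unit EG.
have Gu : G *m u = a *: ev o1.
  have e1 : G *m u = a *: ev o1 + (u' o2 0 + bform w2 u' - qform w2 * a) *: ev o2.
    rewrite /G -mulmxA u'E /g2 ESD_apply bform_e ?o2pos // pt_o2 ua aw2.
    exact: vec_id2.
  set c := u' o2 0 + bform w2 u' - qform w2 * a in e1.
  have hc : (2%:R * a) * c = 0.
    have := pG u u; rewrite huu e1.
    rewrite !bformDl !bformDr !bformZl !bformZr ev_iso ?o1pos ?o2pos //.
    rewrite !bform_e ?o1pos ?o2pos // pt_o1 pt_o2 !evE !eqxx o1_2 /= => <-.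
    ring.
  have u2a : (2%:R * a) \is a GRing.unit by rewrite unitrM h2 Pu.
  have c0 : c = 0 by rewrite -[c](mulKr u2a) hc mulr0.
  by rewrite e1 c0 scale0r addr0.
have Gconj : ESD u v = invmx G *m ESD (G *m u) (G *m v) *m G.
  by rewrite -mulmxA -ESD_conj // mulKmx.
rewrite Gconj Gu ESD_scale.
set wf := a *: (G *m v).
have Jwf : forall i, I (wf i 0).
  move=> i; rewrite !mxE; apply: (idlM Ii); apply: (idl_sum Ii) => j.
  exact: (idlM Ii).
have hwf : bform (ev o1) wf = 0.
  by rewrite bformZr -bformZl -Gu pG huv.
have EX : EO_rel I (ESD (ev o1) wf).
  apply: (unified (G := EO_rel I) (J := I) (p := o1)) => //.
  - exact: gg_one.
  - by move=> x y; apply: gg_mul.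
  - by move=> x; apply: gg_inv.
  - exact: o1pos.
  - by rewrite o1v.
  - by rewrite pt_o1 o2v.
  - move=> c Ic; rewrite F1o1; apply: gg_gen; exists 1%:M, (F1 n 1 (- c)).
    split; first exact: gg_one.
    split; last by rewrite mul1mx invmx1 mulmx1.
    apply: gg_gen; exists 1%N, (- c); split => //; split; last by left.
    exact: (idlN Ii).
  - move=> q q2 x Ex; have q0 : (0 < q)%N by apply: leq_trans q2.
    by apply: EO_rel_conj => //; apply: genR.
have := EO_rel_conj (gg_inv EG) EX.
by rewrite invmxK.
Qed.
End Basics.

Theorem mainTheorem9 (R : comUnitRingType) (I : R -> Prop) (n : nat)
  (u v : 'cV[R]_((n.*2).+1)) :
  semilocal R -> (2%:R : R) \is a GRing.unit -> is_ideal I -> (3 <= n)%N ->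
  unimodular u -> qform u = 0 ->
  (forall i, I (v i 0)) -> bform u v = 0 ->
  EO_rel I (ESD u v).
Proof.
move=> SL h2 Ii n3 hun hq hv huv.
have n1 : (1 <= n)%N by apply: leq_trans n3.
exact: (main_sec h2 n1 SL Ii hun hq hv huv).
Qed.
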